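(* Consider a zero-one knapsack instance with $n$ items, integer capacity $W>0$, positive integer weights $w_i$ and integer profits $v_i$, and let $\mathcal{S}^*$ be its set of optimal solutions. Suppose the tables $V(i,w)$, $C(i,w)$ are given, defined by: $V(0,w)=0$, $C(0,w)=1$ for $0\le w\le W$; $V(i,w)=-\infty$, $C(i,w)=0$ for $w<0$; and for $1\le i\le n$, $0\le w\le W$, $V(i,w)=\max\{V(i-1,w),V(i-1,w-w_i)+v_i\}$ and $C(i,w)=C(i-1,w)+C(i-1,w-w_i)$ if $V(i-1,w)=V(i-1,w-w_i)+v_i$, $C(i,w)=C(i-1,w)$ if $V(i-1,w)>V(i-1,w-w_i)+v_i$, and $C(i,w)=C(i-1,w-w_i)$ otherwise. Consider the algorithm that, given a positive integer $k$, repeats the following procedure $k$ times independently and returns the collection of the $k$ outputs: start with $L=\emptyset$, $i=n$, $w=W$; while $i>0$ and $w>0$: if $w_i\le w$ and $V(i,w)=V(i-1,w)=V(i-1,w-w_i)+v_i$, then with probability $C(i-1,w-w_i)/C(i,w)$ add $i$ to $L$ and set $w\leftarrow w-w_i$; else if $V(i,w)>V(i-1,w)$, add $i$ to $L$ and set $w\leftarrow w-w_i$; then set $i\leftarrow i-1$; output $L$. This algorithm produces $k$ samples, each distributed uniformly at random on $\mathcal{S}^*$, in time $O(kn)$.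
   Context: For $s\subseteq[n]=\{1,\dots,n\}$ let $w(s)=\sum_{i\in s}w_i$ and $v(s)=\sum_{i\in s}v_i$. The set of feasible solutions is $\mathcal{S}=\{s\subseteq[n]: w(s)\le W\}$, $v_{\max}=\max_{s\in\mathcal{S}}v(s)$, and $\mathcal{S}^*=\{s\in\mathcal{S}: v(s)=v_{\max}\}$. Running time counts each table lookup, comparison, arithmetic operation and random draw as a constant-time operation. *)

(* Defs.v *)
From mathcomp Require Import all_boot all_order all_algebra.
Set Implicit Arguments. Unset Strict Implicit. Unset Printing Implicit Defensive.
Import Order.TTheory GRing.Theory Num.Theory.
Local Open Scope ring_scope.

(* An element of [dist A] is a finite list of execution paths, each recorded
   as (probability, number of constant-time operations, result). *)
Definition dist (A : Type) := seq (rat * nat * A).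

Definition dret {A} (x : A) : dist A := [:: (1, 0%N, x)].

Definition dbind {A B} (d : dist A) (f : A -> dist B) : dist B :=
  flatten [seq [seq (p.1.1 * q.1.1, (p.1.2 + q.1.2)%N, q.2) | q <- f p.2] | p <- d].

Definition tick {A} (c : nat) (d : dist A) : dist A :=
  [seq (p.1.1, (p.1.2 + c)%N, p.2) | p <- d].

Definition flip (p : rat) : dist bool := [:: (p, 1%N, true); (1 - p, 1%N, false)].

Definition prob {A : eqType} (d : dist A) (x : A) : rat :=
  \sum_(p <- d | p.2 == x) p.1.1.

(* ---------- extended integers Z u {-oo}: None = -oo ---------- *)
Definition oadd (a : option int) (b : int) : option int := omap (fun x => x + b) a.
Definition olt (a b : option int) : bool :=
  match a, b with
  | None, Some _ => true
  | Some x, Some y => x < y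
  | _, _ => false
  end.
Definition omax (a b : option int) : option int := if olt a b then b else a.

Section Knapsack.
Variables (n : nat) (W : nat) (w : 'I_n -> nat) (v : 'I_n -> int).

(* the paper's items are 1..n; item i is the ordinal i-1 *)
Definition item (i : nat) : option 'I_n := insub i.-1.
Definition wt (i : nat) : nat := oapp w 0%N (item i).
Definition vt (i : nat) : int := oapp v 0 (item i).

Definition weight (s : {set 'I_n}) : nat := (\sum_(i in s) w i)%N.
Definition value (s : {set 'I_n}) : int := \sum_(i in s) v i.
Definition feasible (s : {set 'I_n}) : bool := (weight s <= W)%N.
Definition Sstar : {set {set 'I_n}} :=
  [set s | feasible s & [forall t, feasible t ==> (value t <= value s)]].

Fixpoint Vtab (i : nat) (x : int) : option int :=
  if x < 0 then None else
  match i with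
  | 0%N => Some 0
  | i'.+1 => omax (Vtab i' x) (oadd (Vtab i' (x - (wt i'.+1)%:Z)) (vt i'.+1))
  end.

Fixpoint Ctab (i : nat) (x : int) : nat :=
  if x < 0 then 0%N else
  match i with
  | 0%N => 1%N
  | i'.+1 =>
      let a := Vtab i' x in
      let b := oadd (Vtab i' (x - (wt i'.+1)%:Z)) (vt i'.+1) in
      if a == b then (Ctab i' x + Ctab i' (x - (wt i'.+1)%:Z))%N
      else if olt b a then Ctab i' x
      else Ctab i' (x - (wt i'.+1)%:Z)
  end.

(* The while loop, with current index i, remaining capacity x and set L.
   Each iteration charges the lookups / comparisons / arithmetic it performs. *)
Fixpoint sloop (i : nat) (x : int) (L : {set 'I_n}) : dist {set 'I_n} :=
  match i with
  | 0%N => tick 1 (dret L)                         (* test i > 0 *)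
  | i'.+1 =>
    if ~~ (0 < x) then tick 2 (dret L)              (* tests i > 0, w > 0 *)
    else
      let wi := (wt i)%:Z in
      let addi := if item i is Some j then j |: L else L in
      if [&& wi <= x, Vtab i x == Vtab i' x & Vtab i' x == oadd (Vtab i' (x - wi)) (vt i)]
      then
        (* 2 loop tests, ~9 ops for the test, 4 ops for the ratio, 3 updates *)
        tick 18 (dbind (flip ((Ctab i' (x - wi))%:R / (Ctab i x)%:R))
                  (fun b => if b then sloop i' (x - wi) addi else sloop i' x L))
      else if olt (Vtab i' x) (Vtab i x)
      then tick 17 (sloop i' (x - wi) addi)
      else tick 15 (sloop i' x L)
  end.

(* one run of the procedure (3 operations for the initialisation) *)
Definition sample1 : dist {set 'I_n} := tick 3 (sloop n W%:Z set0).

Fixpoint samples (k : nat) : dist (seq {set 'I_n}) :=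
  match k with
  | 0%N => dret [::]
  | k'.+1 => dbind sample1 (fun s => dbind (samples k') (fun ss => dret (s :: ss)))
  end.

End Knapsack.

(* Main.v *)
Require Import Defs.
From mathcomp Require Import all_boot all_order all_algebra.
From mathcomp Require Import zify ring lra.
Set Implicit Arguments. Unset Strict Implicit. Unset Printing Implicit Defensive.
Import Order.TTheory GRing.Theory Num.Theory.
Local Open Scope ring_scope.

Lemma prob_tick (A : eqType) c (d : dist A) x : prob (tick c d) x = prob d x.
Proof. by rewrite /prob /tick big_map. Qed.

Lemma prob_ret (A : eqType) (y x : A) : prob (dret y) x = (y == x)%:R.
Proof. by rewrite /prob /dret big_cons big_nil; case: eqP => _ //=; rewrite addr0. Qed.

Lemma prob_bind (A B : eqType) (d : dist A) (f : A -> dist B) x :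
  prob (dbind d f) x = \sum_(p <- d) p.1.1 * prob (f p.2) x.
Proof.
rewrite /prob /dbind big_flatten big_map /=; apply: eq_bigr => p _.
by rewrite big_map big_distrr /=.
Qed.

Lemma prob_flip (B : eqType) p (f : bool -> dist B) x :
  prob (dbind (flip p) f) x = p * prob (f true) x + (1 - p) * prob (f false) x.
Proof. by rewrite prob_bind /flip !big_cons big_nil addr0. Qed.

Lemma mem_tick (A : eqType) c (d : dist A) p : p \in tick c d ->
  exists2 q, q \in d & p = (q.1.1, (q.1.2 + c)%N, q.2).
Proof. by move/mapP. Qed.

Lemma mem_bind (A B : eqType) (d : dist A) (f : A -> dist B) p : p \in dbind d f ->
  exists2 q, q \in d & exists2 r, r \in f q.2 & p = (q.1.1 * r.1.1, (q.1.2 + r.1.2)%N, r.2).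
Proof.
rewrite /dbind => /flattenP [s /mapP [q qd ->]] /mapP [r rf ->].
by exists q => //; exists r.
Qed.

Arguments tick : simpl never. Arguments dret : simpl never. Arguments dbind : simpl never. Arguments flip : simpl never.
Arguments Vtab : simpl never. Arguments item : simpl never. Arguments wt : simpl never. Arguments vt : simpl never.
Arguments Ctab : simpl never.

Lemma mem_ret (A : eqType) (y : A) p : p \in dret y -> p = (1, 0%N, y).
Proof. by rewrite /dret inE => /eqP. Qed.

Lemma sloop_time n (w : 'I_n -> nat) v i x L p :
  p \in sloop w v i x L -> (p.1.2 <= 19 * i + 2)%N.
Proof.
elim: i x L p => [|i IH] x L p /=.
  by move=> /mem_tick [q] /mem_ret -> ->.
case: ifP => _.
  by move=> /mem_tick [q] /mem_ret -> -> /=; lia.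
case: ifP => _.
  move=> /mem_tick [q] /mem_bind [b]; rewrite /flip !inE => /orP [] /eqP -> [r].
    by move=> /IH /= H -> -> /=; lia.
  by move=> /IH /= H -> -> /=; lia.
case: ifP => _ /mem_tick [[[a b] c]] /IH H -> /=; move: H => /=; lia.
Qed.

Lemma samples_time n W (w : 'I_n -> nat) v k p :
  p \in samples W w v k -> (p.1.2 <= k * (19 * n + 5))%N.
Proof.
elim: k p => [|k IH] p /=.
  by move/mem_ret ->.
move=> /mem_bind [q] /mem_tick [[[a b] c]] /sloop_time /= Hq' -> [r] /mem_bind [[[a' b'] c']] /IH /= Hr'
  [r''] /mem_ret -> -> /=; move=> -> /=; rewrite mulSn; lia.
Qed.

Definition ole (a b : option int) := ~~ olt b a.

Lemma ole_refl a : ole a a.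
Proof. by case: a => [a|] //=; rewrite /ole /= ltxx. Qed.

Lemma ole_maxl a b : ole a (omax a b).
Proof. case: a => [a|]; case: b => [b|]; rewrite /ole /omax /= //; try case: ifP => /= //; lia. Qed.

Lemma ole_maxr a b : ole b (omax a b).
Proof. case: a => [a|]; case: b => [b|]; rewrite /ole /omax /= //; try case: ifP => /= //; lia. Qed.

Lemma ole_maxl_eq a b c : omax a b = c -> ole a c.
Proof. by move=> <-; apply: ole_maxl. Qed.
Lemma ole_maxr_eq a b c : omax a b = c -> ole b c.
Proof. by move=> <-; apply: ole_maxr. Qed.

Lemma ole_trans a b c : ole a b -> ole b c -> ole a c.
Proof. by rewrite /ole; case: a b c => [a|] [b|] [c|] //=; lia. Qed.

Lemma ole_anti u c : ole (Some u) c -> ole c (Some u) -> c = Some u.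
Proof. rewrite /ole; case: c => [c|] //= ??; congr Some; lia. Qed.

Lemma ole_add u c d : ole (Some u) c -> ole (Some (u + d)) (oadd c d).
Proof. rewrite /ole; case: c => [c|] //=; lia. Qed.

Lemma omax_cases a b : omax a b = if olt a b then b else a.
Proof. by []. Qed.

Lemma oadd_Some c d m : oadd c d = Some m -> exists2 m', c = Some m' & m = m' + d.
Proof. by case: c => [c|] //= [<-]; exists c. Qed.

Lemma olt_total a b : a != b -> ~~ olt b a -> olt a b.
Proof.
case: a => [a|]; case: b => [b|] //=; try by rewrite eqxx.
move=> H1 H2; have: a != b by apply: contra H1 => /eqP ->.
lia.
Qed.

Lemma olt_asym a b : olt a b -> ~~ olt b a.
Proof. case: a b => [a|] [b|] //=; lia. Qed.

Lemma olt_irr a : ~~ olt a a.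
Proof. by case: a => [a|] //=; rewrite ltxx. Qed.

Lemma itemS n i (H : (i < n)%N) : item n i.+1 = Some (Ordinal H).
Proof. by rewrite /item /= insubT. Qed.

Section Core.
Variables (n : nat) (w : 'I_n -> nat) (v : 'I_n -> int).
Hypothesis wpos : forall i, (0 < w i)%N.

Lemma Vtab_neg i x : x < 0 -> Vtab w v i x = None.
Proof. by case: i => [|i] /= H; rewrite /Vtab H. Qed.
Lemma Vtab0 x : 0 <= x -> Vtab w v 0 x = Some 0.
Proof. by move=> H; rewrite /Vtab ltNge H. Qed.
Lemma VtabS i x : 0 <= x -> Vtab w v i.+1 x =
  omax (Vtab w v i x) (oadd (Vtab w v i (x - (wt w i.+1)%:Z)) (vt v i.+1)).
Proof. by move=> H; rewrite {1}/Vtab ltNge H. Qed.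
Lemma Ctab_neg i x : x < 0 -> Ctab w v i x = 0%N.
Proof. by case: i => [|i] /= H; rewrite /Ctab H. Qed.
Lemma Ctab0 x : 0 <= x -> Ctab w v 0 x = 1%N.
Proof. by move=> H; rewrite /Ctab ltNge H. Qed.
Lemma CtabS i x : 0 <= x -> Ctab w v i.+1 x =
      let a := Vtab w v i x in
      let b := oadd (Vtab w v i (x - (wt w i.+1)%:Z)) (vt v i.+1) in
      if a == b then (Ctab w v i x + Ctab w v i (x - (wt w i.+1)%:Z))%N
      else if olt b a then Ctab w v i x
      else Ctab w v i (x - (wt w i.+1)%:Z).
Proof. by move=> H; rewrite {1}/Ctab ltNge H. Qed.


Definition low i := [set j : 'I_n | (j < i)%N].
Definition cand i x := [set s : {set 'I_n} | (s \subset low i) && ((weight w s)%:Z <= x)].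
Definition opt i x := [set s in cand i x | Vtab w v i x == Some (value v s)].

Lemma weight_D1 (j : 'I_n) (s : {set 'I_n}) : j \in s -> weight w s = (w j + weight w (s :\ j))%N.
Proof. by move=> js; rewrite /weight (big_setD1 j) //=; congr addn; apply: eq_bigl => k; rewrite !inE andbC. Qed.

Lemma value_D1 (j : 'I_n) (s : {set 'I_n}) : j \in s -> value v s = v j + value v (s :\ j).
Proof. by move=> js; rewrite /value (big_setD1 j) //=; congr (_ + _); apply: eq_bigl => k; rewrite !inE andbC. Qed.

Lemma weight0 (s : {set 'I_n}) : weight w s = 0%N -> s = set0.
Proof.
case: (set_0Vmem s) => [//|[j js]]; rewrite (weight_D1 js); have := wpos j; lia.
Qed.

Lemma cand_notin i (H : (i < n)%N) x (s : {set 'I_n}) : Ordinal H \notin s ->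
  (s \in cand i.+1 x) = (s \in cand i x).
Proof.
move=> jn; rewrite !inE; congr andb; apply/subsetP/subsetP => Hs k ks; move: (Hs k ks); rewrite !inE.
  have: k != Ordinal H by apply: contraNneq jn => <-.
  rewrite -val_eqE /=; lia.
lia.
Qed.

Lemma cand_in i (H : (i < n)%N) x (s : {set 'I_n}) : Ordinal H \in s ->
  (s \in cand i.+1 x) = (s :\ Ordinal H \in cand i (x - (w (Ordinal H))%:Z)).
Proof.
move=> js; rewrite !inE (weight_D1 js).
have -> : (s \subset low i.+1) = (s :\ Ordinal H \subset low i).
  apply/subsetP/subsetP => Hs k.
    rewrite !inE => /andP [kj ks]; move: (Hs k ks) kj; rewrite !inE -val_eqE /=; lia.
  move=> ks; rewrite inE; case: (eqVneq k (Ordinal H)) => [-> //|kj].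
  by move: (Hs k); rewrite !inE kj ks => /(_ isT); lia.
congr andb; apply/idP/idP; lia.
Qed.

Lemma low_notin i (H : (i < n)%N) (s : {set 'I_n}) x : s \in cand i x -> Ordinal H \notin s.
Proof.
rewrite inE => /andP [/subsetP Hs _]; apply/negP => /Hs; rewrite inE /=; lia.
Qed.

Lemma cand_mono i x (s : {set 'I_n}) : s \in cand i x -> s \in cand i.+1 x.
Proof.
rewrite !inE => /andP [/subsetP Hs ->]; rewrite andbT; apply/subsetP => k /Hs; rewrite !inE; lia.
Qed.


Lemma Vspec i x : (i <= n)%N ->
  (forall s, s \in cand i x -> ole (Some (value v s)) (Vtab w v i x)) /\
  (forall m, Vtab w v i x = Some m -> exists2 s, s \in cand i x & value v s = m).
Proof.
elim: i x => [|i IH] x Hi.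
  case: (ltrP x 0) => hx.
    by rewrite Vtab_neg //; split => // s; rewrite inE => /andP [_]; lia.
  rewrite Vtab0 //; split.
    move=> s; rewrite inE => /andP [/subsetP Hs _].
    have -> : s = set0 by apply/setP => k; rewrite inE; apply/negP => /Hs; rewrite inE.
    by rewrite /value big_set0 /ole /=; lia.
  move=> m [<-]; exists set0; first by rewrite inE sub0set /weight big_set0.
  by rewrite /value big_set0.
set j := Ordinal Hi.
case: (ltrP x 0) => hx.
  by rewrite Vtab_neg //; split => // s; rewrite inE => /andP [_]; lia.
rewrite VtabS // /wt /vt (itemS Hi) /=.
have [IHa IHb] := IH x (ltnW Hi); have [IHa' IHb'] := IH (x - (w j)%:Z) (ltnW Hi).
split.
  move=> s; case: (boolP (j \in s)) => js.
    rewrite (cand_in _ js) => /IHa' h; rewrite (value_D1 js) addrC.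
    exact: ole_trans (ole_add _ h) (ole_maxr _ _).
  rewrite (cand_notin _ js) => /IHa h; exact: ole_trans h (ole_maxl _ _).
move=> m; rewrite omax_cases; case: ifP => _.
  move/oadd_Some => [m' /IHb' [s sc <-] ->].
  have jn := low_notin Hi sc.
  exists (j |: s); first by rewrite (cand_in _ (setU11 _ _)) setU1K.
  by rewrite (value_D1 (setU11 _ _)) setU1K // addrC.
move/IHb => [s sc <-]; exists s => //; exact: cand_mono.
Qed.

Lemma optE i x s : (s \in opt i x) = (s \in cand i x) && (Vtab w v i x == Some (value v s)).
Proof. by rewrite inE. Qed.

Lemma opt_cand i x s : s \in opt i x -> s \in cand i x.
Proof. by rewrite optE => /andP []. Qed.

Lemma Vtab_some i x : (i <= n)%N -> 0 <= x -> exists m, Vtab w v i x = Some m.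
Proof.
move=> Hi hx; have [Ha _] := Vspec x Hi.
have : set0 \in cand i x by rewrite inE sub0set /weight big_set0.
move/Ha; case: (Vtab w v i x) => [m|] // _; by exists m.
Qed.

Lemma opt_notin i (H : (i < n)%N) x (s : {set 'I_n}) : 0 <= x -> Ordinal H \notin s ->
  (s \in opt i.+1 x) = (s \in opt i x) &&
     (Vtab w v i.+1 x == Vtab w v i x).
Proof.
move=> hx js; rewrite !optE (cand_notin _ js) VtabS // /wt /vt (itemS H) /=.
have [Ha _] := Vspec x (ltnW H).
apply/andP/andP => [[sc /eqP E]|[/andP [sc /eqP aE] /eqP Va]].
  have aS := ole_anti (Ha _ sc) (ole_maxl_eq E).
  by rewrite E aS !eqxx sc.
by rewrite Va aE.
Qed.

Lemma opt_in i (H : (i < n)%N) x (s : {set 'I_n}) : 0 <= x -> Ordinal H \in s ->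
  (s \in opt i.+1 x) = (s :\ Ordinal H \in opt i (x - (w (Ordinal H))%:Z)) &&
     (Vtab w v i.+1 x == oadd (Vtab w v i (x - (w (Ordinal H))%:Z)) (v (Ordinal H))).
Proof.
move=> hx js; rewrite !optE (cand_in _ js) VtabS // /wt /vt (itemS H) /=.
have [Ha _] := Vspec (x - (w (Ordinal H))%:Z) (ltnW H).
rewrite (value_D1 js).
apply/andP/andP => [[sc /eqP E]|[/andP [sc /eqP aE] /eqP Va]].
  have h := ole_add (v (Ordinal H)) (Ha _ sc).
  rewrite [v _ + _]addrC in E; have bS := ole_anti h (ole_maxr_eq E).
  move: (bS) => /oadd_Some [m' m'E e]; have mE : m' = value v (s :\ Ordinal H) by lia.
  by rewrite sc E bS m'E mE !eqxx.
rewrite Va aE /=; split => //; apply/eqP; congr Some; exact: addrC.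
Qed.

Lemma opt_neg i x : x < 0 -> opt i x = set0.
Proof.
move=> hx; apply/setP => s; rewrite optE in_set0; apply/negbTE.
rewrite inE; apply/negP => /andP [/andP [_ h] _]; lia.
Qed.

Lemma opt0 x : 0 <= x -> opt 0 x = [set set0].
Proof.
move=> hx; apply/setP => s; rewrite optE !inE Vtab0 //; apply/idP/idP.
  move=> /andP [/andP [/subsetP Hs _] _]; apply/eqP/setP => k; rewrite inE.
  by apply/negP => /Hs; rewrite inE.
by move=> /eqP ->; rewrite sub0set /weight /value !big_set0 hx eqxx.
Qed.

Lemma Ctab_card i x : (i <= n)%N -> Ctab w v i x = #|opt i x|.
Proof.
elim: i x => [|i IH] x Hi; case: (ltrP x 0) => hx; try by rewrite Ctab_neg // opt_neg // cards0.
  by rewrite Ctab0 // opt0 // cards1.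
set j := Ordinal Hi.
set B := [set s : {set 'I_n} | j \in s].
have memB s : (s \in B) = (j \in s) by rewrite inE.
rewrite CtabS // /wt /vt (itemS Hi) /= !IH ?(ltnW Hi) //.
rewrite -(cardsID B (opt i.+1 x)).
have E1 : opt i.+1 x :\: B = if Vtab w v i.+1 x == Vtab w v i x then opt i x else set0.
  apply/setP => s; rewrite in_setD memB; case: (boolP (j \in s)) => js /=.
    case: ifP => _; rewrite ?in_set0 //; apply/esym/negbTE.
    by apply: contraL js => /opt_cand /(low_notin Hi).
  by rewrite (opt_notin hx js) andbC; case: ifP => _; rewrite ?in_set0.
have E2 : opt i.+1 x :&: B = (fun t => j |: t) @:
     (if Vtab w v i.+1 x == oadd (Vtab w v i (x - (w j)%:Z)) (v j) then opt i (x - (w j)%:Z) else set0).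
  apply/setP => s; rewrite in_setI memB; case: (boolP (j \in s)) => js; rewrite ?andbF ?andbT.
    rewrite (opt_in hx js); case: ifP => _; rewrite ?andbT ?andbF; last by rewrite imset0 in_set0.
    apply/idP/imsetP => [sopt|[t topt ->]].
      by exists (s :\ j) => //; rewrite setD1K.
    by rewrite setU1K //; apply: (low_notin Hi (opt_cand topt)).
  apply/esym/negbTE; apply/imsetP => [[t _ st]]; move: js; by rewrite st setU11.
rewrite E1 E2; set b := oadd _ _.
have Hc : #|(fun t => j |: t) @: (if Vtab w v i.+1 x == b then opt i (x - (w j)%:Z) else set0)| =
   if Vtab w v i.+1 x == b then #|opt i (x - (w j)%:Z)| else 0%N.
  case: ifP => _; last by rewrite imset0 cards0.
  rewrite card_in_imset // => t1 t2 h1 h2 /= e.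
  by rewrite -(setU1K (low_notin Hi (opt_cand h1))) e setU1K // (low_notin Hi (opt_cand h2)).
rewrite Hc (fun_if (fun A : {set {set 'I_n}} => #|A|)) cards0.
rewrite VtabS // /wt /vt (itemS Hi) /= -/j -/b omax_cases.
case: (eqVneq (Vtab w v i x) b) => [ab|ab].
  by rewrite ab (negbTE (olt_irr _)) eqxx addnC.
case: ifP => hba.
  by rewrite (negbTE (olt_asym hba)) eqxx (negbTE ab).
by rewrite (olt_total ab (negbT hba)) eqxx eq_sym (negbTE ab) addn0.
Qed.

Lemma opt_nonempty i x : (i <= n)%N -> 0 <= x -> (0 < #|opt i x|)%N.
Proof.
move=> Hi hx; have [m Vm] := Vtab_some Hi hx; have [_ Hb] := Vspec x Hi.
have [s sc sv] := Hb m Vm; apply/card_gt0P; exists s; by rewrite optE sc Vm sv eqxx.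
Qed.

Lemma opt_zero i : (i <= n)%N -> opt i 0 = [set set0].
Proof.
move=> Hi; have [s0 s0o] := card_gt0P (opt_nonempty Hi (lexx 0)).
have H s : s \in opt i 0 -> s = set0.
  move/opt_cand; rewrite inE => /andP [_ h]; apply: weight0; lia.
apply/setP => s; rewrite inE; apply/idP/eqP => [/H //|->].
by rewrite -(H _ s0o).
Qed.

Lemma Ctab_pos i x : (i <= n)%N -> 0 <= x -> (0 < Ctab w v i x)%N.
Proof. by move=> Hi hx; rewrite Ctab_card //; apply: opt_nonempty. Qed.

Lemma setsub_U1 (j : 'I_n) (L r : {set 'I_n}) : j \notin L ->
  (j |: L \subset r) = (L \subset r) && (j \in r :\: L).
Proof.
move=> jL; rewrite subUset sub1set in_setD jL /= andbC.
by [].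
Qed.

Lemma setD_U1 (j : 'I_n) (L r : {set 'I_n}) : r :\: (j |: L) = (r :\: L) :\ j.
Proof. by rewrite setDDl setUC. Qed.

Lemma sloop_prob i x (L r : {set 'I_n}) : (i <= n)%N -> 0 <= x ->
  (forall k, k \in L -> (i <= k)%N) ->
  prob (sloop w v i x L) r =
  if (L \subset r) && (r :\: L \in opt i x) then ((Ctab w v i x)%:R)^-1 else 0.
Proof.
elim: i x L => [|i IH] x L Hi hx HL /=.
  rewrite prob_tick prob_ret opt0 // Ctab0 // in_set1 setD_eq0 -eqEsubset.
  by case: eqP => _; rewrite ?invr1.
have Hi' := ltnW Hi.
case: ifP => hx0.
  have x0 : x = 0 by lia.
  subst x; rewrite prob_tick prob_ret opt_zero // Ctab_card // opt_zero // cards1.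
  by rewrite in_set1 setD_eq0 -eqEsubset; case: eqP => _; rewrite ?invr1.
set j := Ordinal Hi.
have jL : j \notin L by apply/negP => /HL /=; lia.
have HL' : forall k, k \in L -> (i <= k)%N by move=> k /HL; lia.
have HjL : forall k, k \in j |: L -> (i <= k)%N.
  by move=> k; rewrite !inE => /orP [/eqP -> //|/HL' //].
rewrite /wt /vt (itemS Hi) /= -/j.
have [ma Va] := Vtab_some Hi' hx.
set a := Vtab w v i x; set b := oadd _ _.
have VS : Vtab w v i.+1 x = omax a b by rewrite VtabS // /wt /vt (itemS Hi).
have CS : Ctab w v i.+1 x = if a == b then (Ctab w v i x + Ctab w v i (x - (w j)%:Z))%N
      else if olt b a then Ctab w v i x else Ctab w v i (x - (w j)%:Z).
  by rewrite CtabS // /wt /vt (itemS Hi).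
rewrite CS; clear CS.
case: ifP => cond.
  move: cond => /and3P [wx /eqP Via /eqP ab].
  have hx' : 0 <= x - (w j)%:Z by lia.
  rewrite prob_tick prob_flip IH // IH // ab eqxx.
  have ca := Ctab_pos Hi' hx; have cb := Ctab_pos Hi' hx'.
  move: ca cb; set A := Ctab w v i x; set Bc := Ctab w v i (x - (w j)%:Z) => ca cb.
  rewrite (setsub_U1 r jL) setD_U1.
  case: (boolP (L \subset r)) => Lr /=; last by rewrite !mulr0 addr0.
  case: (boolP (j \in r :\: L)) => ju /=.
    rewrite (opt_in hx ju) -/a -/b Via ab eqxx andbT.
    have -> : (r :\: L \in opt i x) = false.
      by apply/negbTE; apply: contraL ju => /opt_cand /(low_notin Hi).
    rewrite mulr0 addr0; case: ifP => _; rewrite ?mulr0 //.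
    rewrite natrD; field.
    by rewrite -?natrD !pnatr_eq0 -!lt0n ?addn_gt0 ?ca ?cb.
  rewrite (opt_notin hx ju) -/a Via eqxx andbT mulr0 add0r.
  case: ifP => _; rewrite ?mulr0 //.
  rewrite natrD; field.
  by rewrite -?natrD !pnatr_eq0 -!lt0n ?addn_gt0 ?ca ?cb.
case: ifP => hl.
  have hab : olt a b.
    move: hl; rewrite VS omax_cases; case: ifP => // _.
    by rewrite (negbTE (olt_irr _)).
  have Vib : Vtab w v i.+1 x = b by rewrite VS omax_cases hab.
  have hx' : 0 <= x - (w j)%:Z.
    case: (ltrP (x - (w j)%:Z) 0) => // h.
    by move: hab; rewrite /b /a Va (Vtab_neg _ h).
  have ab : a != b by apply: contraTneq hab => ->; exact: olt_irr.
  rewrite (negbTE ab) (negbTE (olt_asym hab)) prob_tick IH //.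
  rewrite (setsub_U1 r jL) setD_U1.
  case: (boolP (L \subset r)) => Lr //=.
  case: (boolP (j \in r :\: L)) => ju /=.
    by rewrite (opt_in hx ju) -/a -/b Vib eqxx andbT.
  by rewrite (opt_notin hx ju) -/a Vib eq_sym (negbTE ab) andbF.
have hab : ~~ olt a b.
  by apply/negP => hab; rewrite VS omax_cases hab hab in hl.
have Via : Vtab w v i.+1 x = a by rewrite VS omax_cases (negbTE hab).
have ab : a != b.
  apply/negP => /eqP ab; move: cond; rewrite Via ab eqxx !andbT => /negbT; rewrite -ltNge => wx.
  by move: ab; rewrite /b /a Va Vtab_neg //; lia.
have hba : olt b a by apply: olt_total; rewrite // eq_sym.
rewrite (negbTE ab) hba prob_tick IH //.
case: (boolP (L \subset r)) => Lr //=.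
case: (boolP (j \in r :\: L)) => ju /=.
  rewrite (opt_in hx ju) -/a -/b Via (negbTE ab) andbF.
  have -> : (r :\: L \in opt i x) = false.
    by apply/negbTE; apply: contraL ju => /opt_cand /(low_notin Hi).
  by [].
by rewrite (opt_notin hx ju) -/a Via eqxx andbT.
Qed.

End Core.

Lemma prob_alt (A : eqType) (d : dist A) x : prob d x = \sum_(q <- d) q.1.1 * (q.2 == x)%:R.
Proof. by rewrite /prob big_mkcond; apply: eq_bigr => q _; case: eqP => _; rewrite ?mulr1 ?mulr0. Qed.

Lemma prob_samples n W (w : 'I_n -> nat) v k ss :
  prob (samples W w v k) ss =
  if size ss == k then \prod_(s <- ss) prob (sample1 W w v) s else 0.
Proof.
elim: k ss => [|k IH] ss /=.
  rewrite prob_ret; case: ss => [|s ss] /=; first by rewrite big_nil.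
  by [].
rewrite prob_bind; case: ss => [|s0 ss'] /=.
  by apply: big1 => p _; rewrite prob_bind big1 ?mulr0 // => q _; rewrite prob_ret /= mulr0.
have E p : prob (dbind (samples W w v k) (fun ss => dret (p :: ss))) (s0 :: ss') =
   (p == s0)%:R * prob (samples W w v k) ss'.
  rewrite prob_bind prob_alt big_distrr; apply: eq_bigr => q _ /=.
  by rewrite prob_ret eqseq_cons; case: (p == s0); case: (q.2 == ss'); rewrite /= ?mulr0 ?mulr1 ?mul1r ?mul0r.
under eq_bigr do rewrite E.
rewrite IH eqSS big_cons.
have -> : \sum_(i <- sample1 W w v) i.1.1 * ((i.2 == s0)%:R * (if size ss' == k then \prod_(s <- ss') prob (sample1 W w v) s else 0))
  = prob (sample1 W w v) s0 * (if size ss' == k then \prod_(s <- ss') prob (sample1 W w v) s else 0).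
  by rewrite prob_alt big_distrl; apply: eq_bigr => p _; rewrite mulrA.
by case: ifP => _; rewrite ?mulr0.
Qed.

Lemma opt_Sstar n W (w : 'I_n -> nat) v : opt w v n W%:Z = Sstar W w v.
Proof.
apply/setP => s; rewrite optE [in RHS]inE.
have -> : s \in cand w n W%:Z = feasible W w s.
  rewrite inE /feasible; have -> : s \subset low n n by apply/subsetP => k _; rewrite inE ltn_ord.
  by rewrite /=; apply/idP/idP; lia.
have [Ha Hb] := Vspec w v W%:Z (leqnn n).
have hW : (0:int) <= W%:Z by lia.
have [m Vm] := Vtab_some w v (leqnn n) hW.
have cf t : (t \in cand w n W%:Z) = feasible W w t.
  rewrite inE /feasible; have -> : t \subset low n n by apply/subsetP => k _; rewrite inE ltn_ord.
  by rewrite /=; apply/idP/idP; lia.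
case: (boolP (feasible W w s)) => fs //=.
rewrite Vm; apply/eqP/forallP => [[<-] t|H].
  apply/implyP; rewrite -cf => /Ha; rewrite Vm /ole /=; lia.
have [t tc tv] := Hb m Vm.
have := H t; rewrite -cf tc /= => h.
have := Ha s; rewrite cf fs Vm /ole /= => /(_ isT) h2.
congr Some; lia.
Qed.

Lemma prob_sample1 n W (w : 'I_n -> nat) v : (forall i, (0 < w i)%N) -> forall s,
  prob (sample1 W w v) s = if s \in Sstar W w v then (#|Sstar W w v|%:R)^-1 else 0.
Proof.
move=> wpos s; rewrite /sample1 prob_tick.
have hW : (0:int) <= W%:Z by lia.
rewrite (sloop_prob v wpos) // ?sub0set ?setD0 /=; last by move=> k; rewrite in_set0.
by rewrite (Ctab_card w v _ (leqnn n)) opt_Sstar.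
Qed.

Theorem theorem3 :
  exists c : nat,
    forall (n W : nat) (w : 'I_n -> nat) (v : 'I_n -> int) (k : nat),
      (0 < W)%N -> (forall i, (0 < w i)%N) -> (0 < k)%N ->
      (* the k outputs are independent and each uniform on S^* *)
      (forall ss : seq {set 'I_n},
         prob (samples W w v k) ss =
         if size ss == k
         then \prod_(s <- ss) (if s \in Sstar W w v then (#|Sstar W w v|%:R)^-1 else 0)
         else 0)
      /\
      (* running time O(k n): every execution path uses at most c*k*(n+1) operations *)
      (forall p, p \in samples W w v k -> (p.1.2 <= c * k * n.+1)%N).
Proof.
exists 24%N => n W w v k _ wpos _; split.
  move=> ss; rewrite prob_samples; case: ifP => // _.
  by apply: eq_bigr => s _; rewrite prob_sample1.
move=> p /samples_time H; nia.
Qed.
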